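(* Let $m\ge 3$ be an integer. Then $m=[z\,y_k\,x_k\,\dots\,y_2\,x_2\,y_1\,x_1]_{\boldsymbol b}$ for some integer $k\ge0$ and integers $x_i,y_i,z$ satisfying: $0\le x_i<q^{2i-1}-1$ for all $1\le i\le k$; $0\le y_i<2p$ for all $1\le i\le k$; $\{y_i-2,y_i-1,y_i\}\subset A+A+A$ for all $1\le i\le k$; and $3\le z\le 6pq^{2k+1}$.
   Context: Fix a prime $p$ and a set $A\subset\{1,\dots,\lfloor p/2\rfloor-1\}$ such that $A\cap(A+A+\{0,1\})=\emptyset$ and $A+A+A$ contains $p+2$ consecutive integers. Let $q>100p$ be a prime power. Let $\boldsymbol b=(b_1,b_2,\dots)$ with $b_i=q^i-1$ for $i$ odd and $b_i=p$ for $i$ even, and for arbitrary integers $x_1,\dots,x_n$ write $[x_n\,\dots\,x_1]_{\boldsymbol b}:=x_1+x_2b_1+x_3b_1b_2+\dots+x_nb_1\cdots b_{n-1}$ (so the $(2i-1)$-th digit has weight $b_1\cdots b_{2i-2}$ and the $2i$-th digit has weight $b_1\cdots b_{2i-1}$). *)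

(* Defs.v *)
From mathcomp Require Import all_boot all_order all_algebra.
Set Implicit Arguments. Unset Strict Implicit. Unset Printing Implicit Defensive.
Import Order.TTheory GRing.Theory Num.Theory.
Local Open Scope ring_scope.

Definition in_AAA (A : pred int) (n : int) : Prop :=
  exists a1 a2 a3, [/\ a1 \in A, a2 \in A, a3 \in A & n = a1 + a2 + a3].

Definition in_AA01 (A : pred int) (n : int) : Prop :=
  exists a1 a2 (e : bool), [/\ a1 \in A, a2 \in A & n = a1 + a2 + e%:R].

Definition prime_power (q : nat) : Prop :=
  exists r e : nat, [/\ prime r, (0 < e)%N & q = (r ^ e)%N].

Definition bseq (p q : nat) (i : nat) : int :=
  if odd i then (q ^ i)%:Z - 1 else p%:Z.

(* [s_n ... s_1]_b where s = [:: s_1; s_2; ...; s_n] (lowest digit first):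
   s_1 + s_2 b_1 + s_3 b_1 b_2 + ... *)
Definition bnum (p q : nat) (s : seq int) : int :=
  \sum_(j < size s) s`_j * \prod_(i < j) bseq p q i.+1.

Definition digits_xyz (k : nat) (x y : nat -> int) (z : int) : seq int :=
  flatten [seq [:: x i; y i] | i <- iota 1 k] ++ [:: z].

(* Main.v *)
Require Import Defs.
From mathcomp Require Import all_boot all_order all_algebra zify.
Import Order.TTheory GRing.Theory Num.Theory.
Local Open Scope ring_scope.

Definition bnumo (p q : nat) (o : nat) (s : seq int) : int :=
  \sum_(j < size s) s`_j * \prod_(i < j) Defs.bseq p q (o + i).+1.

Lemma bnumo_cons p q o a s : bnumo p q o (a :: s) = a + Defs.bseq p q o.+1 * bnumo p q o.+1 s.
Proof.
rewrite /bnumo /= big_ord_recl /= big_ord0 mulr1 mulr_sumr; congr (_ + _).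
apply: eq_bigr => j _; rewrite big_ord_recl /= addn0 mulrCA; congr (_ * (_ * _)).
by apply: eq_bigr => i _; rewrite /bump /= add1n addnS addSn.
Qed.

Lemma bnumo_nil p q o : bnumo p q o [::] = 0.
Proof. by rewrite /bnumo big_ord0. Qed.

Lemma bnumo0 p q s : bnumo p q 0 s = bnum p q s.
Proof. by []. Qed.

Definition digs (t k : nat) (x y : nat -> int) (z : int) : seq int :=
  flatten [seq [:: x i; y i] | i <- iota t.+1 k] ++ [:: z].

Lemma gen (p q : nat) (A : pred int) (c : int)
  (hp : (2 <= p)%N) (hq : (3 <= q)%N) (hc3 : 3 <= c) (hcp : c + p%:Z + 1 < 2 * p%:Z)
  (hc : forall j : nat, (j < p + 2)%N -> in_AAA A (c + j%:Z)) :
  forall (N t : nat) (R : int), 3 <= R -> R <= N%:Z ->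
  exists (k : nat) (x y : nat -> int) (z : int),
    [/\ forall i : nat, (t + 1 <= i <= t + k)%N ->
          [/\ 0 <= x i, x i < (q ^ (2 * i - 1))%N%:Z - 1,
              0 <= y i, y i < 2 * p%:Z
            & [/\ in_AAA A (y i - 2), in_AAA A (y i - 1) & in_AAA A (y i)]],
        3 <= z, z <= 6 * p%:Z * (q ^ (2 * (t + k) + 1))%N%:Z
      & R = bnumo p q (2 * t) (digs t k x y z)].
Proof.
elim=> [|N IH] t R hR hRN; first by lia.
have [hsmall|hbig] := lerP R (6 * p%:Z * (q ^ (2 * (t + 0) + 1))%N%:Z).
  exists 0%N, (fun _ => 0), (fun _ => 0), R; split => //; first by move=> i; lia.
  by rewrite /digs /= bnumo_cons bnumo_nil mulr0 addr0.
set Q := (q ^ (2 * t).+1)%N.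
have hQ : (q <= Q)%N by rewrite /Q expnS leq_pmulr // expn_gt0; lia.
set B : int := Q%:Z - 1.
have hB : 2 <= B by rewrite /B; lia.
have hBQ : (q ^ (2 * (t + 0) + 1))%N = Q by rewrite /Q addn0 addn1.
rewrite hBQ in hbig.
set x0 := (R %% B)%Z; set S := (R %/ B)%Z.
have eR : R = S * B + x0 by rewrite /S /x0 -divz_eq.
have hx0 : 0 <= x0 by rewrite /x0 modz_ge0 //; lia.
have hx0B : x0 < B by rewrite /x0 ltz_pmod //; lia.
set r := ((S - c - 2) %% p%:Z)%Z; set R' := ((S - c - 2) %/ p%:Z)%Z.
have eS : S - c - 2 = R' * p%:Z + r by rewrite /R' /r -divz_eq.
have hr : 0 <= r by rewrite /r modz_ge0 //; lia.
have hrp : r < p%:Z by rewrite /r ltz_pmod //; lia.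
set y0 := c + 2 + r.
have hS : 6 * p%:Z <= S by nia.
have hR' : 3 <= R' by nia.
have hR'N : R' <= N%:Z by nia.
have [k [x [y [z [Hi Hz3 HzB HR']]]]] := IH t.+1 R' hR' hR'N.
exists k.+1, (fun i => if i == t.+1 then x0 else x i),
  (fun i => if i == t.+1 then y0 else y i), z; split => //.
- move=> i hi; case: eqP => [->|ne]; last by apply: Hi; lia.
  have -> : (2 * t.+1 - 1 = (2 * t).+1)%N by lia.
  have hr' : (`|r|%N < p)%N by lia.
  have er : r = (`|r|%N)%:Z by lia.
  split => //; try lia.
  split.
  + have := hc `|r|%N ltac:(lia); congr in_AAA; rewrite /y0; lia.
  + have := hc `|r|.+1%N ltac:(lia); congr in_AAA; rewrite /y0; lia.
  + have := hc `|r|.+2%N ltac:(lia); congr in_AAA; rewrite /y0; lia.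
- by have -> : (t + k.+1 = t.+1 + k)%N by lia.
- rewrite /digs /= bnumo_cons bnumo_cons eqxx.
  have -> : [seq [:: if i == t.+1 then x0 else x i; if i == t.+1 then y0 else y i]
            | i <- iota t.+2 k] = [seq [:: x i; y i] | i <- iota t.+2 k].
    apply/eq_in_map => i; rewrite mem_iota => hi.
    by have /negbTE -> : i != t.+1 by lia.
  have hb1 : Defs.bseq p q (2 * t).+1 = B by rewrite /Defs.bseq /= oddM andFb.
  have hb2 : Defs.bseq p q (2 * t).+2 = p by rewrite /Defs.bseq /= oddM andFb.
  rewrite hb1 hb2.
  have -> : (2 * t).+2 = (2 * t.+1)%N by lia.
  rewrite -/(digs t.+1 k x y z) -HR' /y0; lia.
Qed.

Theorem lemma5p1 (p q : nat) (A : pred int)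
  (hp : prime p)
  (hA : forall a, a \in A -> 1 <= a <= (p %/ 2)%N%:Z - 1)
  (hAdisj : forall a, a \in A -> ~ in_AA01 A a)
  (hAAA : exists c : int, forall j : nat, (j < p + 2)%N -> in_AAA A (c + j%:Z))
  (hq : prime_power q) (hqp : (100 * p < q)%N)
  (m : int) (hm : 3 <= m) :
  exists (k : nat) (x y : nat -> int) (z : int),
    [/\ forall i : nat, (1 <= i <= k)%N ->
          [/\ 0 <= x i, x i < (q ^ (2 * i - 1))%N%:Z - 1,
              0 <= y i, y i < 2 * p%:Z
            & [/\ in_AAA A (y i - 2), in_AAA A (y i - 1) & in_AAA A (y i)]],
        3 <= z, z <= 6 * p%:Z * (q ^ (2 * k + 1))%N%:Z
      & m = bnum p q (digits_xyz k x y z)].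
Proof.
have hp2 := prime_gt1 hp.
have [c hc] := hAAA.
have hc3 : 3 <= c.
  have [a1 [a2 [a3 [h1 h2 h3 e]]]] := hc 0%N ltac:(lia).
  move: (hA _ h1) (hA _ h2) (hA _ h3) => /andP[? ?] /andP[? ?] /andP[? ?]; lia.
have hcp : c + p%:Z + 1 < 2 * p%:Z.
  have [a1 [a2 [a3 [h1 h2 h3 e]]]] := hc p.+1 ltac:(lia).
  move: (hA _ h1) (hA _ h2) (hA _ h3) => /andP[? ?] /andP[? ?] /andP[? ?].
  have : (2 * (p %/ 2) <= p)%N by lia.
  lia.
have [k [x [y [z [Hi Hz3 HzB Hm]]]]] :=
  @gen p q A c hp2 ltac:(lia) hc3 hcp hc `|m|%N 0 m hm ltac:(lia).
exists k, x, y, z; split => //.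
Qed.
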